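(* Let $F$ be a field of characteristic $\neq 2,3$, $V$ an $F$-vector space and $f$ a symmetric bilinear form on $V$. The Jordan algebra $J(V,f)$ admits a derivation with invertible values if and only if there exist $x, y \in V$ such that $f(x,x)\neq 0$, $f(y,y)\neq 0$, $f(x,y)=0$, and $-\frac{f(y,y)}{f(x,x)}$ is not a square in $F$.
   Context: $J(V,f)$ is the vector space $F\oplus V$ with multiplication $(\alpha+v)(\beta+u) = \alpha\beta + f(v,u) + \alpha u + \beta v$ for $\alpha,\beta\in F$, $u,v\in V$; it is a unital Jordan algebra. An element $x$ of a unital Jordan algebra $J$ is invertible if there exists $y\in J$ with $xy=1$, $x^2y=x$. A derivation with invertible values of $J$ is a nonzero derivation $d$ of $J$ such that for every $x \in J$, $d(x)$ is either invertible or equal to $0$. *)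

(* Defs.v *)
From HB Require Import structures.
From mathcomp Require Import all_boot all_order all_algebra.
Set Implicit Arguments. Unset Strict Implicit. Unset Printing Implicit Defensive.
Import GRing.Theory.
Local Open Scope ring_scope.

Section JVF.
Variables (F : fieldType) (V : lmodType F).

(* f is a symmetric bilinear form on V (linearity in the second argument
   follows from symmetry). *)
Definition sym_bilinear (f : V -> V -> F) : Prop :=
  (forall (a : F) (u v w : V), f (a *: u + v) w = a * f u w + f v w) /\
  (forall u v : V, f u v = f v u).

Definition jadd (x y : F * V) : F * V := (x.1 + y.1, x.2 + y.2).
Definition jscale (a : F) (x : F * V) : F * V := (a * x.1, a *: x.2).
Definition jzero : F * V := (0, 0).

Definition jmul (f : V -> V -> F) (x y : F * V) : F * V :=
  (x.1 * y.1 + f x.2 y.2, x.1 *: y.2 + y.1 *: x.2).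
Definition jone : F * V := (1, 0).

Definition jinvertible (f : V -> V -> F) (x : F * V) : Prop :=
  exists y : F * V, jmul f x y = jone /\ jmul f (jmul f x x) y = x.

Definition jderivation (f : V -> V -> F) (d : F * V -> F * V) : Prop :=
  (forall (a : F) (x y : F * V), d (jadd (jscale a x) y) = jadd (jscale a (d x)) (d y)) /\
  (forall x y : F * V, d (jmul f x y) = jadd (jmul f (d x) y) (jmul f x (d y))).

Definition derivation_inv_values (f : V -> V -> F) (d : F * V -> F * V) : Prop :=
  [/\ jderivation f d,
      (exists x, d x <> jzero) &
      (forall x, jinvertible f (d x) \/ d x = jzero)].
End JVF.

(* Main.v *)
Require Import Defs.
From HB Require Import structures.
From mathcomp Require Import all_boot all_order all_algebra.
Import GRing.Theory.
Local Open Scope ring_scope.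
Set Implicit Arguments. Unset Strict Implicit.

Lemma dbl0 (M : zmodType) (a : M) : a = a + a -> a = 0.
Proof. move=> h; apply: (addrI a); by rewrite addr0 -h. Qed.

Section Aux.
Variables (F : fieldType) (V : lmodType F) (f : V -> V -> F).
Hypothesis hf : sym_bilinear f.

Lemma fsym u v : f u v = f v u. Proof. by case: hf. Qed.
Lemma flin a u v w : f (a *: u + v) w = a * f u w + f v w. Proof. by case: hf. Qed.
Lemma f0l w : f 0 w = 0.
Proof.
have := flin 1 0 0 w; rewrite scale1r addr0 mul1r => H.
exact: dbl0.
Qed.
Lemma f0r w : f w 0 = 0. Proof. by rewrite fsym f0l. Qed.
Lemma fDl u v w : f (u + v) w = f u w + f v w.
Proof. by have := flin 1 u v w; rewrite scale1r mul1r. Qed.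
Lemma fZl a u w : f (a *: u) w = a * f u w.
Proof. by rewrite -[a *: u]addr0 flin f0l addr0. Qed.
Lemma fDr u v w : f w (u + v) = f w u + f w v.
Proof. by rewrite fsym fDl !(fsym w). Qed.
Lemma fZr a u w : f w (a *: u) = a * f w u.
Proof. by rewrite fsym fZl fsym. Qed.
Lemma fNl u w : f (- u) w = - f u w.
Proof. by rewrite -scaleN1r fZl mulN1r. Qed.
Lemma fNr u w : f w (- u) = - f w u.
Proof. by rewrite fsym fNl fsym. Qed.
Lemma fBr u v w : f w (u - v) = f w u - f w v.
Proof. by rewrite fDr fNr. Qed.

Lemma jmul1 p : jmul f p (jone V) = p.
Proof. case: p => a w; by rewrite /jmul /= mulr1 f0r addr0 scaler0 add0r scale1r. Qed.
Lemma jmul1' p : jmul f (jone V) p = p.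
Proof. case: p => a w; by rewrite /jmul /= mul1r f0l addr0 scaler0 addr0 scale1r. Qed.

Lemma inv0 w : jinvertible f (0, w) -> f w w != 0.
Proof.
case=> [[b u]]; rewrite /jmul /jone /= !mul0r !add0r scale0r add0r.
case=> [[e1 e2]] [e3 e4].
apply/negP => /eqP hw.
move: e4; rewrite hw !(scale0r, addr0, add0r, scaler0) => e4.
by move: e1; rewrite -e4 f0l => /eqP; rewrite eq_sym oner_eq0.
Qed.

Lemma inv1 w : f w w != 0 -> jinvertible f (0, w).
Proof.
move=> hw; exists (0, (f w w)^-1 *: w).
rewrite /jmul /jone /= !(mul0r, add0r, scale0r, addr0, mulr0) f0l ?addr0 ?add0r fZr mulVf //.
by rewrite scalerA mulfV // scale1r.
Qed.
End Aux.

From mathcomp Require Import ring.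

Section Back.
Variables (F : fieldType) (V : lmodType F) (f : V -> V -> F).
Hypothesis hf : sym_bilinear f.
Variables x y : V.
Hypotheses (hx : f x x != 0) (hy : f y y != 0) (hxy : f x y = 0)
  (hns : ~ (exists c : F, c ^+ 2 = - (f y y / f x x))).

Definition DD v := f y v *: x - f x v *: y.

Lemma fBl u v w : f (u - v) w = f u w - f v w.
Proof. by rewrite (fDl hf) (fNl hf). Qed.

Lemma DDlin a u w : DD (a *: u + w) = a *: DD u + DD w.
Proof.
rewrite /DD !(fDr hf) !(fZr hf) !scalerDl -!scalerA scalerBr.
by rewrite opprD addrACA.
Qed.

Lemma DDskew u v : f (DD v) u + f v (DD u) = 0.
Proof.
rewrite /DD fBl !(fZl hf) !(fBr hf) !(fZr hf) (fsym hf v x) (fsym hf v y).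
ring.
Qed.

Lemma DDval v : f (DD v) (DD v) = f y v ^+ 2 * f x x + f x v ^+ 2 * f y y.
Proof.
rewrite /DD fBl !(fZl hf) !(fBr hf) !(fZr hf) (fsym hf y x) hxy.
ring.
Qed.

Lemma DDaniso v : DD v = 0 \/ f (DD v) (DD v) != 0.
Proof.
have [a0|an] := eqVneq (f y v) 0.
  have [b0|bn] := eqVneq (f x v) 0.
    by left; rewrite /DD a0 b0 !scale0r subr0.
  right; rewrite DDval a0 expr0n /= mul0r add0r.
  by rewrite mulf_neq0 // expf_neq0.
right; rewrite DDval; apply/negP => /eqP h.
have [b0|bn] := eqVneq (f x v) 0.
  move: h; rewrite b0 expr0n /= mul0r addr0 => /eqP.
  by rewrite mulf_eq0 expf_eq0 /= (negbTE an) (negbTE hx).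
apply: hns; exists (f y v / f x v).
have e : f y y = - (f y v ^+ 2 * f x x) / f x v ^+ 2.
  have h' : f y v ^+ 2 * f x x = - (f x v ^+ 2 * f y y).
    by apply/eqP; rewrite -addr_eq0 h.
  rewrite h'; field; exact: bn.
rewrite e; field; apply/andP; split => //.
Qed.

Lemma DDZ a u : DD (a *: u) = a *: DD u.
Proof.
have := DDlin a u 0; rewrite addr0 => ->.
by rewrite /DD !(f0r hf) !scale0r subr0 addr0.
Qed.

Lemma back : exists d, derivation_inv_values f d.
Proof.
exists (fun p => (0, DD p.2)); split.
- split.
  + move=> a [p1 p2] [q1 q2]; by rewrite /jadd /jscale /= mulr0 addr0 DDlin.
  + move=> [p1 p2] [q1 q2]; rewrite /jmul /jadd /=; congr pair.
      by rewrite mul0r mulr0 !add0r DDskew.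
    by rewrite !scale0r add0r addr0 DDlin DDZ addrC.
- exists (0, x) => /= -[] /eqP.
  rewrite /DD (fsym hf y x) hxy scale0r sub0r oppr_eq0 scaler_eq0 (negbTE hx) /= => /eqP y0.
  by move: hy; rewrite y0 (f0l hf) eqxx.
- move=> [p1 p2] /=; case: (DDaniso p2) => [->|h]; [right | left].
    by [].
  exact: inv1.
Qed.
End Back.

Section Fwd.
Variables (F : fieldType) (V : lmodType F) (f : V -> V -> F).
Hypothesis hf : sym_bilinear f.
Hypothesis h2n : (2%:R : F) != 0.
Variable d : F * V -> F * V.
Hypothesis dlin : forall (a : F) (x y : F * V), d (jadd (jscale a x) y) = jadd (jscale a (d x)) (d y).
Hypothesis dmul : forall x y : F * V, d (jmul f x y) = jadd (jmul f (d x) y) (jmul f x (d y)).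
Hypothesis dinv : forall x, jinvertible f (d x) \/ d x = jzero V.

Lemma d00 : d (0, 0) = (0, 0).
Proof.
have e : jadd (jscale 1 (jzero V)) (jzero V) = jzero V.
  by rewrite /jadd /jscale /jzero /= mulr0 scaler0 !addr0.
have H := dlin 1 (jzero V) (jzero V); rewrite e in H.
move: H; rewrite /jzero; case: (d (0, 0)) => a w.
by rewrite /jadd /jscale /= mul1r scale1r; case=> /dbl0 -> /dbl0 ->.
Qed.

Lemma d1 : d (jone V) = (0, 0).
Proof.
have H := dmul (jone V) (jone V); rewrite (jmul1 hf) (jmul1 hf) (jmul1' hf) in H.
by move: H; case: (d (jone V)) => a w; rewrite /jadd /=; case=> /dbl0 -> /dbl0 ->.
Qed.

Lemma dfst a v : d (a, v) = d (0, v).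
Proof.
have e : jadd (jscale a (jone V)) (0, v) = (a, v).
  by rewrite /jadd /jscale /jone /= mulr1 addr0 scaler0 add0r.
rewrite -e dlin d1 /jadd /jscale /=.
by case: (d (0, v)) => b w /=; rewrite mulr0 scaler0 !add0r.
Qed.

Lemma key v : (d (0, v)).1 = 0 /\ f v (d (0, v)).2 = 0.
Proof.
have e : jmul f (0, v) (0, v) = (f v v, 0) by rewrite /jmul /= mul0r add0r !scale0r addr0.
have H := dmul (0, v) (0, v); rewrite e dfst d00 in H.
case E: (d (0, v)) => [a w]; rewrite E /jmul /jadd /= in H.
case: H => h1 h2; split => /=.
  rewrite !scale0r addr0 add0r in h2.
  have : 2%:R *: (a *: v) = 0 by rewrite scaler_nat mulr2n -h2.
  move/eqP; rewrite scaler_eq0 (negbTE h2n) /= scaler_eq0 => /orP [/eqP //|/eqP v0].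
  by move: E; rewrite v0 d00; case=> ->.
rewrite mulr0 mul0r !add0r (fsym hf w v) in h1.
have : f v w * 2%:R = 0 by rewrite mulr_natr mulr2n -h1.
by move/eqP; rewrite mulf_eq0 (negbTE h2n) orbF => /eqP.
Qed.

Definition D v := (d (0, v)).2.

Lemma dE v : d (0, v) = (0, D v).
Proof. have [k1 _] := key v; move: k1; rewrite /D; by case: (d (0, v)) => a w /= ->. Qed.

Lemma Dlin c u w : D (c *: u + w) = c *: D u + D w.
Proof.
have H := dlin c (0, u) (0, w).
have e : jadd (jscale c (0, u)) (0, w) = (0, c *: u + w).
  by rewrite /jadd /jscale /= mulr0 addr0.
by rewrite e !dE /jadd /jscale /= in H; case: H.
Qed.

Lemma D0 : D 0 = 0. Proof. by rewrite /D d00. Qed.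

Lemma skew0 v : f v (D v) = 0. Proof. by have [_ k] := key v. Qed.

Lemma skew u w : f u (D w) + f w (D u) = 0.
Proof.
have := skew0 (1 *: u + w); rewrite Dlin !scale1r.
rewrite !(fDl hf) !(fDr hf) !skew0 add0r addr0 => <-.
by rewrite addrC.
Qed.

Lemma aniso u : D u != 0 -> f (D u) (D u) != 0.
Proof.
move=> hu; case: (dinv (0, u)); rewrite dE; first exact: inv0.
by case=> /eqP; rewrite (negbTE hu).
Qed.

Lemma fwd : (exists x, d x <> jzero V) ->
  exists x y : V, [/\ f x x != 0, f y y != 0, f x y = 0 &
     ~ (exists c : F, c ^+ 2 = - (f y y / f x x))].
Proof.
case=> [[a v]]; rewrite dfst dE => hv.
have Dv : D v != 0 by apply/eqP => h; apply: hv; rewrite h.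
set x := D v.
have hx := aniso Dv.
have Dx : D x != 0.
  apply/eqP => h; have := skew v x; rewrite h (f0r hf) add0r.
  by move/eqP; rewrite (negbTE hx).
set y := D x.
have hy := aniso Dx.
exists x, y; split => //; first exact: skew0.
case=> c hc.
have eyy : f y y = - (c ^+ 2 * f x x) by rewrite hc; field.
have exy : f x y = 0 := skew0 x.
have z0 : D (c *: v + x) = 0.
  apply/eqP; apply: contraT => hz; move: (aniso hz).
  rewrite Dlin -/x -/y !(fDl hf) !(fDr hf) !(fZl hf) !(fZr hf) (fsym hf y x) exy eyy.
  by rewrite mulr0 !addr0 mulrA -expr2 add0r addrN eqxx.
move: z0; rewrite Dlin -/x -/y => z0.
have : f x (c *: x + y) = 0 by rewrite z0 (f0r hf).
rewrite (fDr hf) (fZr hf) exy addr0 => /eqP; rewrite mulf_eq0 (negbTE hx) orbF => /eqP c0.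
by move: z0; rewrite c0 scale0r add0r => y0; move: hy; rewrite -/y y0 (f0l hf) eqxx.
Qed.
End Fwd.

Theorem lemma5 (F : fieldType) (V : lmodType F) (f : V -> V -> F)
  (hf : sym_bilinear f) (h2 : (2%:R : F) != 0) (h3 : (3%:R : F) != 0) :
  (exists d : F * V -> F * V, derivation_inv_values f d) <->
  (exists x y : V, [/\ f x x != 0, f y y != 0, f x y = 0 &
     ~ (exists c : F, c ^+ 2 = - (f y y / f x x))]).
Proof.
split.
  case=> d [[dlin dmul] hex dinv]; exact: (fwd hf h2 dlin dmul dinv hex).
case=> x [y [hx hy hxy hns]]; exact: (back hf hx hy hxy hns).
Qed.
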